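(* Let $H$ be any hypergraph. If there exist a hypergraph $H'$ and an integer $s\ge 2$ such that $H'\subseteq H\subseteq H'(s)$, then $\pi(H)=\pi(H')$.
   Context: A hypergraph $H=(V,E)$ has finite vertex set $V$ and edge set $E\subseteq 2^V$; $R(H)=\{|F|:F\in E\}$. $H_1\subseteq H_2$ means there is an injective $f\colon V(H_1)\to V(H_2)$ with $f(F)\in E(H_2)$ for all $F\in E(H_1)$. For $G$ on $n$ vertices, $h_n(G)=\sum_{F\in E(G)}1/\binom{n}{|F|}$; $\pi_n(H)=\max\{h_n(G): G\text{ on } n \text{ vertices}, R(G)\subseteq R(H), H\not\subseteq G\}$, $\pi(H)=\lim_n\pi_n(H)$. For $H$ on vertex set $\{1,\dots,m\}$, the blowup $H(s)$ has vertex set $V_1\sqcup\dots\sqcup V_m$ with $|V_i|=s$ and edge set $\bigcup_{F\in E(H)}\prod_{i\in F}V_i$. *)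

(* Defs.v *)
From HB Require Import structures.
From mathcomp Require Import all_boot all_order all_algebra.
From mathcomp Require Import all_classical all_reals all_analysis.
Set Implicit Arguments. Unset Strict Implicit. Unset Printing Implicit Defensive.
Import Order.TTheory GRing.Theory Num.Theory numFieldNormedType.Exports.
Local Open Scope ring_scope.

Record hypergraph := Hypergraph { hV : finType; hE : {set {set hV}} }.

Definition hsub (H1 H2 : hypergraph) : bool :=
  [exists f : {ffun hV H1 -> hV H2},
     injectiveb f && [forall F in hE H1, (f @: F) \in hE H2]].

(* The blowup H(s): vertex set hV H x 'I_s (V_i = {i} x 'I_s), and for each
   edge F of H, all sets {(i, g i) : i in F} with g : hV H -> 'I_s,
   i.e. the product prod_{i in F} V_i. *)
Definition blowup (H : hypergraph) (s : nat) : hypergraph :=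
  @Hypergraph (prod (hV H) 'I_s)
    [set [set (i, g i) | i in F] | F : {set hV H} in hE H, g : {ffun hV H -> 'I_s}].

Definition hgraph_on (n : nat) (G : {set {set 'I_n}}) : hypergraph :=
  @Hypergraph 'I_n G.

Definition lubell (R : realType) (n : nat) (G : {set {set 'I_n}}) : R :=
  \sum_(F in G) ('C(n, #|F|)%:R)^-1.

Definition rsub (n : nat) (G : {set {set 'I_n}}) (H : hypergraph) : bool :=
  [forall F in G, [exists F' in hE H, #|F| == #|F'|]].

(* pi_n(H) = max { h_n(G) : G on n vertices, R(G) \subseteq R(H), H not\subseteq G }.
   (Max over an empty family defaults to 0; this only happens when H has no edges.) *)
Definition pi_n (R : realType) (H : hypergraph) (n : nat) : R :=
  \big[Num.max/0]_(G : {set {set 'I_n}} | rsub G H && ~~ hsub H (hgraph_on G))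
     lubell R G.

Definition hpi (R : realType) (H : hypergraph) : R := limn (pi_n R H).

(* Main.v *)
Require Import Defs.
From HB Require Import structures.
From mathcomp Require Import all_boot all_order all_algebra.
From mathcomp Require Import all_classical all_reals all_analysis.
From mathcomp.algebra_tactics Require Import ring lra.
From mathcomp.zify Require Import zify.
Set Implicit Arguments. Unset Strict Implicit. Unset Printing Implicit Defensive.
Import Order.TTheory GRing.Theory Num.Theory numFieldNormedType.Exports.

Lemma hsubP (H1 H2 : hypergraph) :
  reflect (exists f : {ffun hV H1 -> hV H2}, injective f /\
             forall F, F \in hE H1 -> f @: F \in hE H2) (hsub H1 H2).
Proof.
apply: (iffP existsP) => [[f /andP[/injectiveP fi /forall_inP fe]]|[f [fi fe]]].
  by exists f.
by exists f; apply/andP; split; [apply/injectiveP|apply/forall_inP].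
Qed.

Lemma hsub_trans (H1 H2 H3 : hypergraph) :
  hsub H1 H2 -> hsub H2 H3 -> hsub H1 H3.
Proof.
move=> /hsubP[f [fi fe]] /hsubP[g [gi ge]]; apply/hsubP.
exists [ffun x => g (f x)]; split.
  by move=> x y; rewrite !ffunE => /gi /fi.
move=> F FE; have -> : [ffun x => g (f x)] @: F = g @: (f @: F).
  by rewrite -imset_comp; apply: eq_imset => x; rewrite ffunE.
by apply: ge; apply: fe.
Qed.

Lemma card_edge_sub (H1 H2 : hypergraph) (k : nat) :
  hsub H1 H2 -> (exists2 F, F \in hE H1 & #|F| = k) -> (exists2 F, F \in hE H2 & #|F| = k).
Proof.
move=> /hsubP[f [fi fe]] [F FE <-]; exists (f @: F); first exact: fe.
by rewrite card_imset.
Qed.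

Lemma card_edge_blowup (H : hypergraph) s (k : nat) :
  (exists2 F, F \in hE (blowup H s) & #|F| = k) -> (exists2 F, F \in hE H & #|F| = k).
Proof.
move=> [F' /imset2P[F g FE _ ->] <-]; exists F => //.
by rewrite card_imset // => x y [->].
Qed.

Lemma rsub_trans n (G : {set {set 'I_n}}) (H1 H2 : hypergraph) :
  (forall k, (exists2 F, F \in hE H1 & #|F| = k) -> (exists2 F, F \in hE H2 & #|F| = k)) ->
  rsub G H1 -> rsub G H2.
Proof.
move=> HH /forall_inP rG; apply/forall_inP => F FG.
have /exists_inP[F' F'E /eqP e] := rG F FG.
have [F'' F''E e2] := HH _ (ex_intro2 _ _ F' F'E erefl).
by apply/exists_inP; exists F''; rewrite // e e2.
Qed.

Local Open Scope ring_scope.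

Section PiN.
Variable R : realType.

Lemma lubell_ge0 n (G : {set {set 'I_n}}) : 0 <= lubell R G.
Proof. by apply: sumr_ge0 => F _; rewrite invr_ge0 ler0n. Qed.

Lemma pi_n_ge0 H n : 0 <= pi_n R H n.
Proof.
rewrite /pi_n; apply: (big_ind (fun x : R => 0 <= x)) => //.
  by move=> x y hx hy; rewrite le_max hx.
by move=> G _; apply: lubell_ge0.
Qed.

Lemma pi_n_ge H n (G : {set {set 'I_n}}) :
  rsub G H -> ~~ hsub H (hgraph_on G) -> lubell R G <= pi_n R H n.
Proof.
move=> r h; rewrite /pi_n (bigD1 G) /=; last by rewrite r h.
by rewrite le_max lexx.
Qed.

Lemma pi_n_le H n (b : R) : 0 <= b ->
  (forall G : {set {set 'I_n}}, rsub G H -> ~~ hsub H (hgraph_on G) -> lubell R G <= b) ->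
  pi_n R H n <= b.
Proof.
move=> b0 hb; rewrite /pi_n; apply: (big_ind (fun x : R => x <= b)) => //.
  by move=> x y hx hy; rewrite ge_max hx hy.
by move=> G /andP[r h]; apply: hb.
Qed.

Definition lubA (T : finType) (A : {set T}) (G : {set {set T}}) : R :=
  \sum_(F in G | F \subset A) ('C(#|A|, #|F|)%:R)^-1.

Definition embA (H : hypergraph) (T : finType) (A : {set T}) (G : {set {set T}}) :=
  exists f : {ffun hV H -> T},
    [/\ injective f, (forall x, f x \in A) & forall F, F \in hE H -> f @: F \in G].

Lemma transport H (T : finType) (A : {set T}) (G : {set {set T}}) :
  (forall F, F \in G -> F \subset A -> exists2 F', F' \in hE H & #|F| = #|F'|) ->
  ~ embA H A G -> lubA A G <= pi_n R H #|A|.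
Proof.
move=> rG nE.
pose e : 'I_#|A| -> T := enum_val.
have ei : injective e by apply: enum_val_inj.
have eA : forall i, e i \in A by move=> i; apply: enum_valP.
have eK : forall F : {set T}, F \subset A -> e @: (e @^-1: F) = F.
  move=> F FA; apply/setP => x; apply/imsetP/idP.
    by move=> [y]; rewrite inE => ? ->.
  move=> xF; have xA : x \in A by move/fintype.subsetP: FA; apply.
  exists (enum_rank_in xA x); last by rewrite /e enum_rankK_in.
  by rewrite inE /e enum_rankK_in.
pose G0 := [set F : {set 'I_#|A|} | e @: F \in G].
have -> : lubA A G = lubell R G0.
  rewrite /lubA /lubell.
  have -> : \sum_(F in G | F \subset A) ('C(#|A|, #|F|)%:R)^-1 =
            \sum_(F in (fun F0 : {set 'I_#|A|} => e @: F0) @: G0) ('C(#|A|, #|F|)%:R : R)^-1.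
    apply: eq_bigl => F; apply/andP/imsetP.
      move=> [FG FA]; exists (e @^-1: F); last by rewrite eK.
      by rewrite inE eK.
    move=> [F0 F0G ->]; split; first by move: F0G; rewrite inE.
    by apply/fintype.subsetP => x /imsetP[y _ ->].
  rewrite big_imset /=; last by move=> X Y _ _; apply: imset_inj.
  by apply: eq_bigr => F _; rewrite card_imset.
apply: pi_n_ge.
  apply/forall_inP => F FG0; move: (FG0); rewrite inE => eFG.
  have [|F' F'E cF] := rG _ eFG; first by apply/fintype.subsetP => x /imsetP[y _ ->].
  by apply/exists_inP; exists F'; rewrite // -cF card_imset.
apply/negP => /hsubP[f [fi fe]]; apply: nE.
exists [ffun x => e (f x)]; split.
- by move=> x y; rewrite !ffunE => /ei /fi.
- by move=> x; rewrite ffunE.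
move=> F FE; have := fe F FE; rewrite inE /=.
suff -> : [ffun x => e (f x)] @: F = e @: (f @: F) by [].
by rewrite -imset_comp; apply: eq_imset => x; rewrite ffunE.
Qed.

End PiN.

Lemma bin_mulE (n N k : nat) : (k <= N)%N -> (N <= n)%N ->
  ('C(n, k) * 'C(n - k, N - k) = 'C(n, N) * 'C(N, k))%N.
Proof.
move=> kN Nn.
have x0 : (0 < k`! * (N - k)`! * (n - N)`!)%N by rewrite !muln_gt0 !fact_gt0.
apply/eqP; rewrite -(eqn_pmul2r x0); apply/eqP.
have e1 := bin_fact (leq_trans kN Nn).
have e2 : ('C(n - k, N - k) * ((N - k)`! * (n - N)`!))%N = (n - k)`!.
  have h : (N - k <= n - k)%N by apply: leq_sub2r.
  have := bin_fact h; suff -> : (n - k - (N - k) = n - N)%N by [].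
  by lia.
have e3 := bin_fact Nn.
have e4 := bin_fact kN.
transitivity ('C(n, k) * (k`! * (n - k)`!))%N.
  by rewrite -e2; ring.
rewrite e1 -e3 -e4; ring.
Qed.

Lemma card_supsets (T : finType) (S : {set T}) (N : nat) : (#|S| <= N)%N ->
  #|[set A : {set T} | S \subset A & #|A| == N]| = 'C(#|T| - #|S|, N - #|S|).
Proof.
move=> SN.
have cC : (#|~: S| = #|T| - #|S|)%N by rewrite cardsCs finset.setCK.
rewrite -cC -cards_draws.
rewrite -(@card_in_imset _ _ (fun A => A :\: S)).
  apply: eq_card => B; rewrite inE; apply/imsetP/andP.
    move=> [A]; rewrite inE => /andP[SA /eqP cA] ->; split.
      by apply/fintype.subsetP => x; rewrite !inE => /andP[].
    rewrite cardsD (finset.setIidPr SA) cA //.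
  move=> [BS /eqP cB]; exists (B :|: S); last first.
    apply/setP => x; rewrite !inE; case xB: (x \in B) => /=; last by rewrite andNb.
    by move/fintype.subsetP: BS => /(_ x xB); rewrite inE => ->.
  rewrite inE finset.subsetUr /= cardsU cB.
  have -> : B :&: S = finset.set0.
    apply/setP => x; rewrite !inE; case xB: (x \in B) => //=.
    by move/fintype.subsetP: BS => /(_ x xB); rewrite inE => /negbTE ->.
  by rewrite cards0 subn0 subnK.
move=> A1 A2; rewrite !inE => /andP[S1 _] /andP[S2 _] e.
apply/setP => x; have := congr1 (fun X : {set T} => x \in X) e; rewrite /= !inE.
case xS: (x \in S) => /=.
  by rewrite (fintype.subsetP S1 x xS) (fintype.subsetP S2 x xS).
by [].
Qed.

Section Avg.
Variable R : realType.

Lemma average (T : finType) (G : {set {set T}}) (N : nat) :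
  (N <= #|T|)%N -> (forall F, F \in G -> #|F| <= N)%N ->
  \sum_(A : {set T} | #|A| == N) lubA R A G =
  ('C(#|T|, N)%:R : R) * \sum_(F in G) ('C(#|T|, #|F|)%:R)^-1.
Proof.
move=> NT GN.
rewrite /lubA.
transitivity (\sum_(A : {set T} | #|A| == N) \sum_(F in G)
   (if F \subset A then ('C(N, #|F|)%:R : R)^-1 else 0)).
  by apply: eq_bigr => A /eqP cA; rewrite -big_mkcondr cA.
rewrite exchange_big mulr_sumr; apply: eq_bigr => F FG.
rewrite -big_mkcondr.
transitivity (\sum_(A in [set A : {set T} | F \subset A & #|A| == N])
               ('C(N, #|F|)%:R : R)^-1).
  by apply: eq_bigl => A; rewrite inE andbC.
rewrite sumr_const card_supsets ?GN //.
have kN := GN F FG.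
have e := bin_mulE kN NT.
have c1 : ('C(N, #|F|)%:R : R) != 0 by rewrite pnatr_eq0 -lt0n bin_gt0.
have c2 : ('C(#|T|, #|F|)%:R : R) != 0.
  by rewrite pnatr_eq0 -lt0n bin_gt0 (leq_trans kN NT).
rewrite -(mulr_natr (('C(N, #|F|)%:R : R)^-1)); apply/eqP; rewrite mulrC eqr_div //; apply/eqP.
by rewrite -!natrM mulnC e mulnC.
Qed.

End Avg.

Section Mono.
Variable R : realType.

Lemma rsub_size n (G : {set {set 'I_n}}) H F : rsub G H -> F \in G ->
  exists2 F', F' \in hE H & #|F| = #|F'|.
Proof.
move=> /forall_inP rG FG; have /exists_inP[F' F'E /eqP e] := rG F FG.
by exists F'.
Qed.

Lemma free_embA n (G : {set {set 'I_n}}) H (A : {set 'I_n}) :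
  ~~ hsub H (hgraph_on G) -> ~ embA H A G.
Proof.
move=> /negP nh [f [fi fA fe]]; apply: nh; apply/hsubP; exists f; split => //.
Qed.

Lemma pi_mono H n : (#|hV H| <= n)%N -> pi_n R H n.+1 <= pi_n R H n.
Proof.
move=> Hn; apply: pi_n_le; first exact: pi_n_ge0.
move=> G rG hG.
have sz : forall F, F \in G -> (#|F| <= n)%N.
  move=> F FG; have [F' _ ->] := rsub_size rG FG.
  exact: leq_trans (max_card _) Hn.
have av := @average R _ G n.
rewrite card_ord in av; have {av} av := av (leqnSn n) sz.
have cpos : (0 : R) < 'C(n.+1, n)%:R by rewrite ltr0n bin_gt0.
rewrite -(ler_pM2l cpos) -av.
have -> : 'C(n.+1, n)%:R * pi_n R H n =
   \sum_(A : {set 'I_n.+1} | #|A| == n) pi_n R H n.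
  rewrite (eq_bigl (fun A => A \in [set A : {set 'I_n.+1} | #|A| == n])); last first.
    by move=> A; rewrite inE.
  by rewrite sumr_const card_draws card_ord mulr_natl.
apply: ler_sum => A /eqP cA; rewrite -[X in pi_n R H X]cA.
apply: transport; last exact: free_embA.
by move=> F FG _; apply: rsub_size rG FG.
Qed.

Local Open Scope classical_set_scope.
Local Open Scope ring_scope.
Lemma pi_lim H :
  [/\ pi_n R H @ \oo --> limn (pi_n R H),
      forall n, (#|hV H| <= n)%N -> limn (pi_n R H) <= pi_n R H n
    & 0 <= limn (pi_n R H)].
Proof.
set N0 := #|hV H|.
pose v := fun n => pi_n R H (n + N0).
have vni : nonincreasing_seq v.
  apply/nonincreasing_seqP => k; rewrite /v addSn; apply: pi_mono.
  by rewrite leq_addl.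
have vlb : has_lbound (range v).
  by exists 0 => _ [k _ <-]; apply: pi_n_ge0.
have vc : cvgn v := nonincreasing_is_cvgn vni vlb.
have uc : pi_n R H @ \oo --> limn v.
  by rewrite -(cvg_shiftn N0); apply: vc.
have -> : limn (pi_n R H) = limn v by apply: cvg_lim.
split => //.
  move=> n Nn; have := nonincreasing_cvgn_ge vni vc (n - N0).
  by rewrite /v subnK.
apply: limr_ge => //; near=> k; exact: pi_n_ge0.
Unshelve. all: by end_near.
Qed.

End Mono.

Section Ineq.
Variable R : realType.
Local Open Scope ring_scope.

Lemma rearr (a b : R) k : 0 <= a -> 0 <= b ->
  a * b ^+ k.+1 + b * a ^+ k.+1 <= a ^+ k.+2 + b ^+ k.+2.
Proof.
move=> a0 b0; rewrite !(exprS _ k.+1).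
have [ab|ba] := leP a b.
  have : a ^+ k.+1 <= b ^+ k.+1 by rewrite lerXn2r // nnegrE.
  set P := a ^+ k.+1; set Q := b ^+ k.+1 => PQ; nra.
have : b ^+ k.+1 <= a ^+ k.+1 by rewrite lerXn2r // ?nnegrE // ltW.
set P := a ^+ k.+1; set Q := b ^+ k.+1 => PQ; nra.
Qed.

Lemma cheb (T : finType) (a : T -> R) k : (forall x, 0 <= a x) ->
  (\sum_(x : T) a x) * (\sum_(x : T) a x ^+ k.+1) <= #|T|%:R * \sum_(x : T) a x ^+ k.+2.
Proof.
move=> a0.
have e1 : (\sum_(x : T) a x) * (\sum_(x : T) a x ^+ k.+1) = \sum_(x : T) \sum_(y : T) a x * a y ^+ k.+1.
  by rewrite mulr_suml; apply: eq_bigr => x _; rewrite mulr_sumr.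
have e2 : (\sum_(x : T) a x) * (\sum_(x : T) a x ^+ k.+1) = \sum_(x : T) \sum_(y : T) a y * a x ^+ k.+1.
  by rewrite [RHS]exchange_big /= mulr_suml; apply: eq_bigr => x _; rewrite mulr_sumr.
have e3 : #|T|%:R * \sum_(x : T) a x ^+ k.+2 = \sum_(x : T) \sum_(y : T) a x ^+ k.+2.
  rewrite mulr_sumr; apply: eq_bigr => x _.
  by rewrite sumr_const mulr_natl.
have e4 : #|T|%:R * \sum_(x : T) a x ^+ k.+2 = \sum_(x : T) \sum_(y : T) a y ^+ k.+2.
  rewrite [RHS]exchange_big /= mulr_sumr; apply: eq_bigr => x _.
  by rewrite sumr_const mulr_natl.
have : ((\sum_(x : T) a x) * (\sum_(x : T) a x ^+ k.+1)) *+ 2 <= (#|T|%:R * \sum_(x : T) a x ^+ k.+2) *+ 2.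
  rewrite !mulr2n {1}e1 e2 {1}e3 e4 -!big_split /=.
  apply: ler_sum => x _; rewrite -!big_split /=; apply: ler_sum => y _.
  by rewrite addrC [X in _ <= X]addrC rearr.
by rewrite lerMn2r.
Qed.

Lemma power_mean (T : finType) (a : T -> R) k : (forall x, 0 <= a x) ->
  (\sum_(x : T) a x) ^+ k.+1 <= #|T|%:R ^+ k * \sum_(x : T) a x ^+ k.+1.
Proof.
move=> a0; elim: k => [|k IH]; first by rewrite expr0 mul1r.
have s0 : 0 <= \sum_(x : T) a x by apply: sumr_ge0.
rewrite exprS; apply: le_trans (ler_wpM2l s0 IH) _.
rewrite mulrCA exprSr -mulrA ler_wpM2l ?exprn_ge0 ?ler0n //; exact: cheb.
Qed.

Lemma bern (a b : R) k : 0 <= b -> b <= a ->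
  a ^+ k.+1 - k%:R * b * a ^+ k <= a * (a - b) ^+ k.
Proof.
move=> b0 ba; elim: k => [|k IH]; first by rewrite expr1 !expr0 !mulr1 mul0r subr0.
have ab0 : 0 <= a - b by rewrite subr_ge0.
have -> : a * (a - b) ^+ k.+1 = (a - b) * (a * (a - b) ^+ k) by rewrite exprS mulrCA.
apply: le_trans (ler_wpM2l ab0 IH).
have a0 : 0 <= a by apply: le_trans ba.
have P0 : 0 <= a ^+ k by rewrite exprn_ge0.
rewrite !exprS; set P := a ^+ k.
have k0 : (0 : R) <= k%:R by rewrite ler0n.
rewrite -natr1.
have h : 0 <= k%:R * b * b * P by rewrite !mulr_ge0.
have -> : (a - b) * (a * P - k%:R * b * P) =
  a * (a * P) - (k%:R + 1) * b * (a * P) + k%:R * b * b * P by ring.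
by rewrite lerDl.
Qed.

End Ineq.

Lemma ffact_ge n k : ((n - k) ^ k <= n ^_ k)%N.
Proof.
elim: k => [|k IH] //; rewrite ffactnSr expnSr; apply: leq_mul.
  apply: leq_trans IH; case: k => [|k] //.
  by rewrite leq_exp2r // leq_sub2l.
by rewrite leq_sub2l.
Qed.

Lemma cnt (T : finType) (Q : pred T) : #|[set x | Q x]| = (\sum_x (Q x : nat))%N.
Proof.
rewrite -sum1dep_card big_mkcond /=; apply: eq_bigr => x _; by case: (Q x).
Qed.

Lemma card_pairs (A B : finType) (P : A -> B -> bool) :
  #|[set p : A * B | P p.1 p.2]| = (\sum_a #|[set b | P a b]|)%N.
Proof.
rewrite cnt -(pair_bigA _ (fun a b => (P a b : nat))) /=; apply: eq_bigr => a _; by rewrite cnt.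
Qed.

Lemma swap_cnt (A B : finType) (P : A -> B -> bool) :
  (\sum_a #|[set b | P a b]|)%N = (\sum_b #|[set a | P a b]|)%N.
Proof.
transitivity (\sum_a \sum_b (P a b : nat))%N.
  by apply: eq_bigr => a _; rewrite cnt.
rewrite exchange_big /=; apply: eq_bigr => b _; by rewrite cnt.
Qed.

Section Step.
Variable R : realType.
Variables (I : finType) (n s : nat).
Local Open Scope ring_scope.
Local Notation Y := {ffun 'I_s -> 'I_n}.

Definition upd (g : {ffun I -> 'I_n}) (i0 : I) (y : 'I_n) : {ffun I -> 'I_n} :=
  [ffun x => if x == i0 then y else g x].

Lemma upd_at g i0 y : upd g i0 y i0 = y.
Proof. by rewrite ffunE eqxx. Qed.

Lemma upd_invol g i0 y : upd (upd g i0 y) i0 (g i0) = g.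
Proof. by apply/ffunP => x; rewrite !ffunE; case: eqP => // ->. Qed.

Lemma upd_upd g i0 y z : upd (upd g i0 y) i0 z = upd g i0 z.
Proof. by apply/ffunP => x; rewrite !ffunE; case: eqP. Qed.

Lemma sum_a (W : {set {ffun I -> 'I_n}}) i0 :
  (\sum_g #|[set y | upd g i0 y \in W]|)%N = (#|W| * n)%N.
Proof.
rewrite -(card_pairs (fun g y => upd g i0 y \in W)).
pose phi := fun p : {ffun I -> 'I_n} * 'I_n => (upd p.1 i0 p.2, p.1 i0).
have phiK : involutive phi.
  by move=> [g y]; rewrite /phi /= upd_at upd_invol.
have -> : [set p | upd p.1 i0 p.2 \in W] = phi @^-1: finset.setX W [set: 'I_n].
  by apply/setP => p; rewrite !inE andbT.
rewrite card_preimset; last exact: inv_inj phiK.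
by rewrite cardsX cardsT card_ord.
Qed.

Lemma cnt_on (W : {set {ffun I -> 'I_n}}) i0 g :
  #|[set y : {ffun 'I_s -> 'I_n} | [forall j, upd g i0 (y j) \in W]]| =
  (#|[set y | upd g i0 y \in W]| ^ s)%N.
Proof.
rewrite -[in RHS](card_ord s) -card_ffun_on; apply: eq_card => y.
rewrite inE; apply/forallP/ffun_onP => h j; have := h j; by rewrite inE.
Qed.

Lemma step (W : {set {ffun I -> 'I_n}}) i0 (d : R) :
  (0 < s)%N -> 0 < d -> (s <= n)%N ->
  (s * s)%:R <= d ^+ s / 2 * n%:R ->
  d * n%:R ^+ #|I| <= #|W|%:R ->
  exists y : {ffun 'I_s -> 'I_n}, injective y /\
    d ^+ s / 4 * n%:R ^+ #|I| <=
      #|[set g : {ffun I -> 'I_n} | [forall j, upd g i0 (y j) \in W]]|%:R.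
Proof.
move=> s0 d0 sn hn hW.
set NX := n%:R ^+ #|I| : R.
have n0 : (0 < n)%N by apply: leq_trans sn.
have nR0 : (0 : R) < n%:R by rewrite ltr0n.
have NX0 : 0 < NX by rewrite exprn_gt0.
pose a g := #|[set y | upd g i0 y \in W]|.
pose c (y : {ffun 'I_s -> 'I_n}) :=
  #|[set g : {ffun I -> 'I_n} | [forall j, upd g i0 (y j) \in W]]|.
have cX : forall y, (c y)%:R <= NX.
  move=> y; rewrite /NX -natrX ler_nat.
  by rewrite -[X in (_ <= X ^ _)%N](card_ord n) -card_ffun max_card.
have tot : (\sum_y (c y)%:R : R) = \sum_g ((a g)%:R ^+ s).
  rewrite -natr_sum.
  have -> : (\sum_y c y)%N = (\sum_g a g ^ s)%N.
    rewrite /c -(swap_cnt (fun g (y : {ffun 'I_s -> 'I_n}) => [forall j, upd g i0 (y j) \in W])).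
    by apply: eq_bigr => g _; rewrite cnt_on.
  by rewrite natr_sum; apply: eq_bigr => g _; rewrite natrX.
have cardX : #|{ffun I -> 'I_n}|%:R = NX by rewrite card_ffun card_ord natrX.
have pm : d ^+ s * n%:R ^+ s * NX <= \sum_y (c y)%:R.
  rewrite tot.
  case: s s0 {hn tot cX c} => [//|s'] _.
  have := @power_mean R _ (fun g => (a g)%:R : R) s' (fun g => ler0n _ _).
  rewrite cardX -natr_sum /a sum_a.
  have e : ((#|W| * n)%N%:R : R) ^+ s'.+1 >= NX ^+ s' * (d ^+ s'.+1 * n%:R ^+ s'.+1 * NX).
    rewrite natrM exprMn -exprMn.
    have -> : NX ^+ s' * (d ^+ s'.+1 * n%:R ^+ s'.+1 * NX) = (d * NX) ^+ s'.+1 * n%:R ^+ s'.+1.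
      by rewrite exprMn (exprSr NX s'); ring.
    rewrite exprMn ler_wpM2r ?exprn_ge0 ?ler0n // lerXn2r ?nnegrE //.
    by rewrite mulr_ge0 // ltW.
  move=> h; have := le_trans e h.
  by rewrite ler_pM2l // exprn_gt0.
have bn : (n%:R : R) ^+ s - (n ^_ s)%:R <= d ^+ s / 2 * n%:R ^+ s.
  have b := @bern R (n%:R : R) (s%:R : R) s (ler0n _ _).
  rewrite ler_nat sn in b; have {}b := b isT.
  have fs : (n%:R - s%:R : R) ^+ s <= (n ^_ s)%:R.
    by rewrite -natrB // -natrX ler_nat ffact_ge.
  have : n%:R * ((n%:R : R) ^+ s - (n ^_ s)%:R) <= n%:R * (d ^+ s / 2 * n%:R ^+ s).
    have h1 : n%:R * ((n%:R : R) ^+ s - (n ^_ s)%:R) <= (s * s)%:R * n%:R ^+ s.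
      have h2 : (n%:R : R) * (n%:R - s%:R) ^+ s <= n%:R * (n ^_ s)%:R.
        by rewrite ler_wpM2l // ltW.
      rewrite natrM; move: (le_trans b h2); rewrite exprS; nra.
    apply: le_trans h1 _.
    have -> : n%:R * (d ^+ s / 2 * n%:R ^+ s) = (d ^+ s / 2 * n%:R) * n%:R ^+ s by ring.
    by rewrite ler_wpM2r // exprn_ge0.
  by rewrite ler_pM2l.
have split : \sum_y (c y)%:R =
   \sum_(y : Y | injectiveb y) (c y)%:R + \sum_(y : Y | ~~ injectiveb y) ((c y)%:R : R).
  by rewrite (bigID (fun y : {ffun 'I_s -> 'I_n} => injectiveb y)).
have cinj : #|[set y : {ffun 'I_s -> 'I_n} | injectiveb y]| = (n ^_ s)%N.
  by rewrite card_inj_ffuns !card_ord.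
have cni : (#|[set y : {ffun 'I_s -> 'I_n} | ~~ injectiveb y]|%:R : R) = n%:R ^+ s - (n ^_ s)%:R.
  have := cardsC [set y : {ffun 'I_s -> 'I_n} | injectiveb y].
  rewrite card_ffun !card_ord cinj.
  have -> : ~: [set y : {ffun 'I_s -> 'I_n} | injectiveb y] = [set y : Y | ~~ injectiveb y].
    by apply/setP => y; rewrite !inE.
  move=> e; rewrite -natrX -e natrD addrC addKr //.
have nonb : \sum_(y : Y | ~~ injectiveb y) ((c y)%:R : R) <= (n%:R ^+ s - (n ^_ s)%:R) * NX.
  apply: le_trans (ler_sum _ (fun y _ => cX y)) _.
  rewrite -cni -sum1dep_card natr_sum mulr_suml; apply: ler_sum => y _.
  by rewrite mul1r.
have injb : d ^+ s / 2 * n%:R ^+ s * NX <= \sum_(y : Y | injectiveb y) ((c y)%:R : R).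
  have := pm; rewrite split; have := ler_wpM2r (ltW NX0) bn.
  move: nonb; set A := \sum_(y : Y | injectiveb y) _; set B := \sum_(y : Y | ~~ injectiveb y) _.
  set P := (n%:R : R) ^+ s; set Q := ((n ^_ s)%:R : R); set D := d ^+ s.
  move=> h1 h2 h3; nra.
case: (boolP [exists y : {ffun 'I_s -> 'I_n}, injectiveb y && (d ^+ s / 4 * NX <= (c y)%:R)]).
  by move=> /existsP[y /andP[/injectiveP yi yc]]; exists y.
move=> /existsPn hy; exfalso.
have : \sum_(y : Y | injectiveb y) ((c y)%:R : R) <= (n ^_ s)%:R * (d ^+ s / 4 * NX).
  rewrite -cinj -sum1dep_card natr_sum mulr_suml; apply: ler_sum => y yi.
  rewrite mul1r; have := hy y; rewrite yi /= -ltNge => h; exact: ltW.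
have : ((n ^_ s)%:R : R) <= n%:R ^+ s.
  rewrite -natrX ler_nat -cinj; apply: leq_trans (max_card _) _.
  by rewrite card_ffun !card_ord.
have ds : 0 < d ^+ s by rewrite exprn_gt0.
have ns : (0 : R) < n%:R ^+ s by rewrite exprn_gt0.
move: injb; set A := \sum_(y : Y | injectiveb y) _.
set P := (n%:R : R) ^+ s; set Q := ((n ^_ s)%:R : R); set D := d ^+ s.
move=> h1 h2 h3.
have h4 : 0 < D * P * NX by rewrite !mulr_gt0.
have h5 : 0 <= D * NX by rewrite mulr_ge0 // ltW.
have h6 : Q * (D * NX) <= P * (D * NX) by rewrite ler_wpM2r.
nra.
Qed.

End Step.

Section Erdos.
Variable R : realType.
Local Open Scope ring_scope.

Lemma exists_nat (x : R) : exists N, forall n, (N <= n)%N -> x <= n%:R.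
Proof.
exists (Num.Def.trunc x).+1 => n hn.
by apply: le_trans (ltW (truncnS_gt x)) _; rewrite ler_nat.
Qed.

Lemma upd_same (I : finType) n (h : {ffun I -> 'I_n}) i0 y :
  h i0 = y -> upd h i0 y = h.
Proof. by move=> <-; apply/ffunP => x; rewrite ffunE; case: eqP => // ->. Qed.

Lemma erdos (I : finType) (s : nat) : (0 < s)%N -> forall l : seq I, uniq l ->
  forall d : R, 0 < d -> exists N0, forall n, (N0 <= n)%N ->
  forall W : {set {ffun I -> 'I_n}}, d * n%:R ^+ #|I| <= #|W|%:R ->
  exists (U : I -> {set 'I_n}) (g : {ffun I -> 'I_n}),
    (forall i, i \in l -> #|U i| = s) /\
    forall h : {ffun I -> 'I_n}, (forall i, i \notin l -> h i = g i) ->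
      (forall i, i \in l -> h i \in U i) -> h \in W.
Proof.
move=> s0; elim => [|i0 l IH] /=.
  move=> _ d d0; exists 1%N => n n1 W hW.
  have : (0 : R) < #|W|%:R.
    by apply: lt_le_trans hW; rewrite mulr_gt0 // exprn_gt0 // ltr0n.
  rewrite ltr0n card_gt0 => /set0Pn[g gW].
  exists (fun _ => finset.set0), g; split => // h hg _.
  suff -> : h = g by [].
  by apply/ffunP => x; apply: hg.
move=> /andP[i0l ul] d d0.
have d'0 : 0 < d ^+ s / 4 by rewrite divr_gt0 // exprn_gt0.
have [N0 HN0] := IH ul _ d'0.
have [N1 HN1] := exists_nat ((s * s)%:R * 2 / d ^+ s).
exists (maxn (maxn N0 s) N1) => n; rewrite !geq_max => /andP[/andP[nN0 ns] nN1] W hW.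
have hn : (s * s)%:R <= d ^+ s / 2 * n%:R.
  have := HN1 n nN1 => h.
  have ds : 0 < d ^+ s by rewrite exprn_gt0.
  have e : (s * s)%:R = d ^+ s / 2 * ((s * s)%:R * 2 / d ^+ s) :> R.
    by field; rewrite gt_eqF.
  rewrite [X in X <= _]e ler_wpM2l //.
  by rewrite divr_ge0 // ltW.
have [y [yi hy]] := step i0 s0 d0 ns hn hW.
set W' := [set g : {ffun I -> 'I_n} | [forall j, upd g i0 (y j) \in W]] in hy.
have [U [g [hU hg]]] := HN0 n nN0 W' hy.
exists (fun i => if i == i0 then [set y j | j in 'I_s] else U i), g; split.
  move=> i; rewrite inE; case: eqP => [-> _|ni /= il].
    by rewrite card_imset // card_ord.
  exact: hU.
move=> h hgh hUh.
have := hUh i0; rewrite inE eqxx /= => /(_ isT) /imsetP[j _ hj].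
pose h' := upd h i0 (g i0).
have h'W : h' \in W'.
  apply: hg.
    move=> i il; rewrite /h' ffunE; case: eqP => [->//|ni]; apply: hgh.
    by rewrite inE negb_or il andbT; apply/eqP.
  move=> i il; rewrite /h' ffunE; case: eqP => [ii0|ni].
    by move: i0l; rewrite -ii0 il.
  by have := hUh i; rewrite inE il orbT => /(_ isT); case: eqP.
move: h'W; rewrite inE => /forallP /(_ j).
by rewrite /h' upd_upd upd_same.
Qed.

End Erdos.

Local Open Scope ring_scope.
Lemma erdos_full (R : realType) (I : finType) (s : nat) (d : R) :
  (0 < s)%N -> 0 < d -> exists N0, forall n, (N0 <= n)%N ->
  forall W : {set {ffun I -> 'I_n}}, d * n%:R ^+ #|I| <= #|W|%:R ->
  exists U : I -> {set 'I_n}, (forall i, #|U i| = s) /\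
    forall h : {ffun I -> 'I_n}, (forall i, h i \in U i) -> h \in W.
Proof.
move=> s0 d0; have [N0 HN0] := @erdos R I s s0 (enum I) (enum_uniq _) d d0.
exists N0 => n nN0 W hW; have [U [g [hU hh]]] := HN0 n nN0 W hW.
exists U; split; first by move=> i; apply: hU; rewrite mem_enum.
move=> h hhU; apply: hh => i; rewrite ?mem_enum //.
Qed.

Lemma blow_emb (H' : hypergraph) s n (G : {set {set 'I_n}}) (U : hV H' -> {set 'I_n}) :
  (forall i, #|U i| = s) ->
  (forall h : {ffun hV H' -> 'I_n}, (forall i, h i \in U i) ->
      injective h /\ forall F, F \in hE H' -> h @: F \in G) ->
  hsub (blowup H' s) (hgraph_on G).
Proof.
move=> hU hh.
pose u (i : hV H') (t : 'I_s) : 'I_n := enum_val (cast_ord (esym (hU i)) t).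
have uU : forall i t, u i t \in U i by move=> i t; apply: enum_valP.
have uinj : forall i t t', u i t = u i t' -> t = t'.
  by move=> i t t' /enum_val_inj /cast_ord_inj.
apply/hsubP.
exists [ffun p : hV H' * 'I_s => u p.1 p.2]; split.
  move=> [i t] [i' t']; rewrite !ffunE /= => e.
  case: (eqVneq i i') => [ii'|ni].
    by subst i'; rewrite (uinj _ _ _ e).
  exfalso.
  pose h := [ffun k => if k == i then u i t else if k == i' then u i' t' else u k t].
  have hU' : forall k, h k \in U k.
    move=> k; rewrite /h ffunE; case: eqP => [->|_]; first exact: uU.
    case: eqP => [->|_]; exact: uU.
  have [hi _] := hh h hU'.
  have ni' : (i' == i) = false by rewrite eq_sym (negbTE ni).
  have : h i = h i' by rewrite /h !ffunE !eqxx ni'.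
  by move/hi => /eqP; rewrite (negbTE ni).
move=> F' /imset2P[F g FE _ ->].
pose h := [ffun x => u x (g x)].
have hU' : forall k, h k \in U k by move=> k; rewrite ffunE.
have [_ he] := hh h hU'.
suff -> : [ffun p : hV H' * 'I_s => u p.1 p.2] @: [set (i, g i) | i in F] = h @: F.
  exact: he.
rewrite -imset_comp; apply: eq_imset => x /=; by rewrite !ffunE.
Qed.

Lemma pow_le_bin n m : (2 * m <= n)%N -> (n ^ m <= 'C(n, m) * (2 ^ m * m`!))%N.
Proof.
move=> hm; case: m hm => [|m] hm; first by rewrite bin0.
have h1 : (n ^ m.+1 <= (2 * (n - m.+1)) ^ m.+1)%N by rewrite leq_exp2r //; lia.
apply: leq_trans h1 _; rewrite mulnCA bin_ffact expnMn.
by rewrite leq_mul2l ffact_ge orbT.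
Qed.

Section EvNat.
Local Open Scope classical_set_scope.
Lemma ev_nat (P : nat -> Prop) : (\forall n \near \oo, P n) ->
  exists N, forall n, (N <= n)%N -> P n.
Proof. by move=> [N _ HN]; exists N => n hn; apply: HN. Qed.

End EvNat.

Section Core.
Variable R : realType.
Local Open Scope ring_scope.

Lemma lubA_le (T : finType) (A : {set T}) (G : {set {set T}}) :
  lubA R A G <= (2 ^ #|A|)%:R.
Proof.
rewrite /lubA.
apply: (@le_trans _ _ (\sum_(F in G | F \subset A) (1 : R))).
  apply: ler_sum => F /andP[_ FA].
  have hc : (0 : R) < 'C(#|A|, #|F|)%:R by rewrite ltr0n bin_gt0 subset_leq_card.
  by rewrite invf_le1 // ler1n bin_gt0 subset_leq_card.
rewrite (_ : \sum_(F in G | F \subset A) (1:R) = (\sum_(F in G | F \subset A) 1%N)%:R);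
  last by rewrite natr_sum.
rewrite sum1dep_card ler_nat -card_powerset; apply: subset_leq_card.
by apply/fintype.subsetP => F; rewrite inE powersetE => /andP[].
Qed.

End Core.

Lemma cnt_in (T : finType) (S : {set T}) : #|S| = (\sum_x ((x \in S) : nat))%N.
Proof. rewrite -sum1_card big_mkcond /=; apply: eq_bigr => x _; by case: (x \in S). Qed.

Section Core2.
Variable R : realType.
Local Open Scope ring_scope.

Lemma core (H' : hypergraph) (s : nat) (e : R) : (0 < s)%N -> 0 < e ->
  exists N0, forall n, (N0 <= n)%N -> forall G : {set {set 'I_n}}, rsub G H' ->
    limn (pi_n R H') + e <= lubell R G -> hsub (blowup H' s) (hgraph_on G).
Proof.
move=> s0 e0.
set L := limn (pi_n R H'); set m := #|hV H'|.
have [uc uge L0] := pi_lim R H'.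
have e4 : 0 < e / 4 by rewrite divr_gt0.
have [N1 HN1] : exists N1, forall n, (N1 <= n)%N -> pi_n R H' n <= L + e / 4.
  have := uc; move/cvgrPdist_le => /(_ _ e4) /ev_nat [N1 HN1]; exists N1 => n hn.
  by have := HN1 n hn; rewrite distrC ler_distl => /andP[_].
set N := maxn N1 m.
have mN : (m <= N)%N by rewrite leq_maxr.
have piN : pi_n R H' N < L + e / 2.
  apply: le_lt_trans (HN1 N (leq_maxl _ _)) _; rewrite ltrD2l; lra.
set d : R := e / 2 / (2 ^ N)%:R / 'C(N, m)%:R / (2 ^ m * m`!)%:R.
have F0 : (0 : R) < (2 ^ N)%:R by rewrite ltr0n expn_gt0.
have Q0 : (0 : R) < 'C(N, m)%:R by rewrite ltr0n bin_gt0.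
have M0 : (0 : R) < (2 ^ m * m`!)%:R by rewrite ltr0n muln_gt0 expn_gt0 fact_gt0.
have d0 : 0 < d by rewrite !divr_gt0.
have [N2 HN2] := @erdos_full R (hV H') s d s0 d0.
exists (maxn (maxn N (2 * m)) N2) => n.
rewrite geq_max => /andP[]; rewrite geq_max => /andP[nN nm] nN2 G rG hG.
pose E := [set f : {ffun hV H' -> 'I_n} | injectiveb f && [forall F in hE H', f @: F \in G]].
suff hE : d * n%:R ^+ m <= #|E|%:R.
  have [U [hU hUE]] := HN2 n nN2 E hE.
  apply: (blow_emb hU) => h hh; have := hUE h hh.
  by rewrite inE => /andP[/injectiveP hi /forall_inP he].
have sz : forall F, F \in G -> (#|F| <= N)%N.
  move=> F FG; have [F' _ ->] := rsub_size rG FG.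
  by apply: leq_trans (max_card _) mN.
have av := @average R _ G N.
rewrite card_ord in av; have {av} av := av nN sz.
pose B := [set A : {set 'I_n} | (#|A| == N) && (L + e / 2 < lubA R A G)].
have L2 : 0 <= L + e / 2 by rewrite addr_ge0 // ltW // divr_gt0.
have hB : 'C(n, N)%:R * (e / 2) <= #|B|%:R * (2 ^ N)%:R.
  have h1 : 'C(n, N)%:R * (L + e) <= \sum_(A : {set 'I_n} | #|A| == N) lubA R A G.
    by rewrite av ler_wpM2l.
  have h2 : \sum_(A : {set 'I_n} | #|A| == N) lubA R A G <=
     \sum_(A : {set 'I_n} | #|A| == N) ((if A \in B then (2 ^ N)%:R else 0) + (L + e / 2)).
    apply: ler_sum => A /eqP cA; case: (boolP (A \in B)) => AB.
      by apply: le_trans (lubA_le R A G) _; rewrite cA lerDl.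
    rewrite add0r; move: AB; rewrite inE cA eqxx /= -leNgt; exact.
  have h3 : \sum_(A : {set 'I_n} | #|A| == N) ((if A \in B then (2 ^ N)%:R else 0) + (L + e / 2))
       = #|B|%:R * (2 ^ N)%:R + 'C(n, N)%:R * (L + e / 2).
    rewrite big_split /=; congr (_ + _).
      rewrite -big_mkcondr /=.
      rewrite (eq_bigl (fun A => A \in B)); last first.
        move=> A /=; apply/andP/idP => [[_ ->]|AB] //; split => //.
        by move: AB; rewrite inE => /andP[].
      by rewrite sumr_const mulr_natl.
    rewrite (eq_bigl (fun A => A \in [set A : {set 'I_n} | #|A| == N])); last first.
      by move=> A; rewrite inE.
    by rewrite sumr_const card_draws card_ord mulr_natl.
  move: (le_trans h1 h2); rewrite h3.
  set Cn := 'C(n, N)%:R; set BF := _ * _; move=> h; nra.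
have hBE : (#|B| <= #|E| * 'C(n - m, N - m))%N.
  pose Sup (f : {ffun hV H' -> 'I_n}) :=
    [set A : {set 'I_n} | (f @: [set: hV H']) \subset A & #|A| == N].
  have cSup : forall f, f \in E -> #|Sup f| = 'C(n - m, N - m).
    move=> f; rewrite inE => /andP[/injectiveP fi _].
    have cf : #|f @: [set: hV H']| = m by rewrite card_imset // cardsT.
    by rewrite /Sup card_supsets cf ?card_ord.
  apply: (@leq_trans (\sum_(f in E) #|Sup f|)); last first.
    by rewrite (eq_bigr (fun _ => 'C(n - m, N - m))) ?sum_nat_const //; move=> f /cSup.
  rewrite cnt_in (eq_bigr (fun f => \sum_A ((A \in Sup f) : nat))%N); last first.
    by move=> f _; rewrite cnt_in.
  rewrite exchange_big /=; apply: leq_sum => A _.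
  case AB: (A \in B) => //=.
  move: AB; rewrite inE => /andP[/eqP cA hA].
  have rA : forall F, F \in G -> F \subset A -> exists2 F', F' \in hE H' & #|F| = #|F'|.
    by move=> F FG _; apply: rsub_size rG FG.
  have : ~ ~ embA H' A G.
    move=> ne; have := transport R rA ne; rewrite cA => h.
    by have := lt_trans piN hA; rewrite ltNge h.
  move/contrapT => [f [fi fA fe]].
  have fE : f \in E.
    by rewrite inE; apply/andP; split; [apply/injectiveP | apply/forall_inP].
  rewrite (bigD1 f) //=.
  suff -> : A \in Sup f by [].
  rewrite inE cA eqxx andbT; apply/fintype.subsetP => x /imsetP[y _ ->]; exact: fA.
have K0 : (0 < 'C(n - m, N - m))%N by rewrite bin_gt0 leq_sub2r.
have idt := bin_mulE mN nN.
have pb := pow_le_bin nm.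
have K0R : (0 : R) < 'C(n - m, N - m)%:R by rewrite ltr0n.
have idtR : 'C(n, m)%:R * 'C(n - m, N - m)%:R = 'C(n, N)%:R * 'C(N, m)%:R :> R.
  by rewrite -!natrM idt.
have pbR : n%:R ^+ m <= 'C(n, m)%:R * (2 ^ m * m`!)%:R :> R.
  by rewrite -natrX -natrM ler_nat.
have hBER : #|B|%:R <= #|E|%:R * 'C(n - m, N - m)%:R :> R.
  by rewrite -natrM ler_nat.
set Cn := 'C(n, N)%:R : R in hB idtR.
set K := 'C(n - m, N - m)%:R : R in K0R idtR hBER.
set P := 'C(n, m)%:R : R in idtR pbR.
set Q := 'C(N, m)%:R : R in Q0 idtR.
set F := (2 ^ N)%:R : R in F0 hB.
set M := (2 ^ m * m`!)%:R : R in M0 pbR.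
set X := n%:R ^+ m : R in pbR.
set EE := #|E|%:R : R in hBER.
set BB := #|B|%:R : R in hB hBER.
have s1 : P * (e / 2) * K <= EE * F * Q * K.
  have -> : P * (e / 2) * K = (Cn * (e / 2)) * Q.
    by rewrite mulrAC idtR; ring.
  have h := ler_wpM2r (ltW Q0) hB.
  have h' : BB * F * Q <= EE * K * F * Q.
    by rewrite ler_wpM2r ?ler_wpM2r // ltW.
  have -> : EE * F * Q * K = EE * K * F * Q by ring.
  exact: le_trans h h'.
rewrite ler_pM2r // in s1.
have -> : d * X = (e / 2 * X) / (F * Q * M).
  by rewrite /d; field; rewrite ?gt_eqF.
rewrite ler_pdivrMr; last by rewrite !mulr_gt0.
have e2 : 0 <= e / 2 by rewrite divr_ge0 // ltW.
apply: le_trans (ler_wpM2l e2 pbR) _.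
have -> : e / 2 * (P * M) = (P * (e / 2)) * M by ring.
apply: le_trans (ler_wpM2r (ltW M0) s1) _.
by rewrite !mulrA.
Qed.

End Core2.

Section Final.
Local Open Scope classical_set_scope.
Local Open Scope ring_scope.

Lemma main_cvg (R : realType) (H H' : hypergraph) (s : nat) :
  (2 <= s)%N -> hsub H' H -> hsub H (blowup H' s) ->
  pi_n R H @ \oo --> limn (pi_n R H').
Proof.
move=> s2 h1 h2.
have s0 : (0 < s)%N by apply: leq_trans s2.
have RHH' : forall k, (exists2 F, F \in hE H & #|F| = k) ->
    (exists2 F, F \in hE H' & #|F| = k).
  by move=> k /(card_edge_sub h2) /card_edge_blowup.
have RH'H : forall k, (exists2 F, F \in hE H' & #|F| = k) ->
    (exists2 F, F \in hE H & #|F| = k).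
  by move=> k; apply: card_edge_sub h1.
set L := limn (pi_n R H').
have [uc uge L0] := pi_lim R H'.
have le1 : forall n, pi_n R H' n <= pi_n R H n.
  move=> n; apply: pi_n_le; first exact: pi_n_ge0.
  move=> G rG hG; apply: pi_n_ge; first exact: rsub_trans RH'H rG.
  by apply: contra hG => hHG; apply: hsub_trans h1 hHG.
apply/cvgrPdist_le => e e0.
have [N0 HN0] := core H' s0 e0.
exists (maxn N0 #|hV H'|) => // n /=; rewrite geq_max => /andP[nN0 nm].
rewrite distrC ler_distl; apply/andP; split.
  apply: le_trans (le_trans (uge n nm) (le1 n)).
  by rewrite lerBlDr lerDl ltW.
apply: pi_n_le; first by rewrite addr_ge0 // ltW.
move=> G rG hG; rewrite leNgt; apply/negP => lt.
have := HN0 n nN0 G (rsub_trans RHH' rG) (ltW lt) => hb.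
by move/negP: hG; apply; apply: hsub_trans h2 hb.
Qed.

End Final.

Unset Implicit Arguments.

Theorem mainTheorem5 (R : realType) (H H' : hypergraph) (s : nat) :
  (2 <= s)%N -> hsub H' H -> hsub H (blowup H' s) -> hpi R H = hpi R H'.
Proof.
move=> s2 h1 h2; rewrite /hpi.
by have /cvg_lim -> := main_cvg (R := R) s2 h1 h2.
Qed.
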